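(* Let $\Delta\subseteq{\sim}\mathrm{FO}$ and $\alpha\in\mathrm{FO}$. If $\Delta\models\alpha$ (in team semantics), then there is a first-order sentence $\varepsilon$ (a formula without free variables) such that $\Delta\models\varepsilon$ and $\varepsilon\models\alpha$.
   Context: Fix a countable vocabulary $\tau$ and a countably infinite set of variables. $\mathrm{FO}$: first-order $\tau$-formulas built with $\neg,\to,\forall x$; ${\sim}\mathrm{FO}=\{{\sim}\beta:\beta\in\mathrm{FO}\}$. A valuation is $(\mathcal A,T)$ with $\mathcal A$ a $\tau$-structure (nonempty domain) and $T$ a (possibly empty) set of assignments of domain elements to the variables. For $\beta\in\mathrm{FO}$, $(\mathcal A,T)\models\beta$ iff $(\mathcal A,s)\models\beta$ classically for every $s\in T$; $(\mathcal A,T)\models{\sim}\beta$ iff $(\mathcal A,T)\not\models\beta$. $\Gamma\models\psi$ iff every valuation satisfying all formulas in $\Gamma$ satisfies $\psi$. *)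

(* Defs.v *)
From Stdlib Require Import Fin.

Set Implicit Arguments.

(* A vocabulary tau: function symbols (constants = arity 0) and relation
   symbols, each with an arity.  Countability is imposed in the theorem. *)
Record signature := {
  Fsym : Type; far : Fsym -> nat;
  Rsym : Type; rar : Rsym -> nat }.

Definition countable_type (X : Type) : Prop :=
  exists f : X -> nat, forall x y, f x = f y -> x = y.

Section FOL.
Variable S : signature.

Definition var := nat.

Inductive term : Type :=
| tVar : var -> term
| tApp : forall f : Fsym S, (Fin.t (far S f) -> term) -> term.

Inductive form : Type :=
| fEq  : term -> term -> form
| fRel : forall r : Rsym S, (Fin.t (rar S r) -> term) -> form
| fNeg : form -> form
| fImp : form -> form -> form
| fAll : var -> form -> form.

Record structure := {
  dom : Type;
  dom_inh : dom;
  fint : forall f : Fsym S, (Fin.t (far S f) -> dom) -> dom;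
  rint : forall r : Rsym S, (Fin.t (rar S r) -> dom) -> Prop }.

Definition assignment (A : structure) := var -> dom A.

Definition update {A : structure} (s : assignment A) (x : var) (a : dom A)
  : assignment A := fun y => if PeanoNat.Nat.eqb y x then a else s y.

Fixpoint teval {A : structure} (s : assignment A) (t : term) : dom A :=
  match t with
  | tVar x => s x
  | tApp f args => fint A f (fun i => teval s (args i))
  end.

Fixpoint sat {A : structure} (s : assignment A) (phi : form) : Prop :=
  match phi with
  | fEq t1 t2 => teval s t1 = teval s t2
  | fRel r args => rint A r (fun i => teval s (args i))
  | fNeg p => ~ sat s p
  | fImp p q => sat s p -> sat s q
  | fAll x p => forall a : dom A, sat (update s x a) p
  end.

Fixpoint occurs (x : var) (t : term) : Prop :=
  match t with
  | tVar y => x = y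
  | tApp f args => exists i, occurs x (args i)
  end.

Fixpoint free (x : var) (phi : form) : Prop :=
  match phi with
  | fEq t1 t2 => occurs x t1 \/ occurs x t2
  | fRel r args => exists i, occurs x (args i)
  | fNeg p => free x p
  | fImp p q => free x p \/ free x q
  | fAll y p => x <> y /\ free x p
  end.

Definition sentence (phi : form) : Prop := forall x, ~ free x phi.

(* team formulas: FO formulas and weak (contradictory) negations ~beta *)
Inductive tform : Type :=
| tFO : form -> tform
| tTilde : form -> tform.

(* a team: possibly empty set of assignments *)
Definition team (A : structure) := assignment A -> Prop.

Definition tsat {A : structure} (T : team A) (psi : tform) : Prop :=
  match psi with
  | tFO b => forall s, T s -> sat s b
  | tTilde b => ~ (forall s, T s -> sat s b)
  end.

Definition entails (Gamma : tform -> Prop) (psi : tform) : Prop :=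
  forall (A : structure) (T : team A),
    (forall g, Gamma g -> tsat T g) -> tsat T psi.

Definition subset_tildeFO (Delta : tform -> Prop) : Prop :=
  forall g, Delta g -> exists b, g = tTilde b.

End FOL.

Arguments tFO {S}.
Arguments tTilde {S}.

(* Main.v *)
Require Import Defs.
From Stdlib Require Import Lia FunctionalExtensionality PeanoNat.

Fixpoint foralls {S : signature} (n : nat) (phi : form S) : form S :=
  match n with
  | 0 => phi
  | Datatypes.S m => fAll m (foralls m phi)
  end.

Lemma fin_bound (k : nat) (P : Fin.t k -> nat -> Prop) :
  (forall i m m', m <= m' -> P i m -> P i m') ->
  (forall i, exists n, P i n) -> exists n, forall i, P i n.
Proof.
  induction k as [|k IH]; intros Hmon H.
  - exists 0. intro i. apply Fin.case0. exact i.
  - destruct (H Fin.F1) as [n0 Hn0].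
    destruct (IH (fun i => P (Fin.FS i))) as [n1 Hn1].
    + intros; eauto.
    + intro i; apply H.
    + exists (n0 + n1). intro i.
      apply (Fin.caseS' i).
      * apply Hmon with n0; [lia|exact Hn0].
      * intro j. apply Hmon with n1; [lia|apply Hn1].
Qed.

Lemma term_bound (S : signature) (t : term S) :
  exists n, forall x, occurs x t -> x < n.
Proof.
  induction t as [y|f args IH].
  - exists (Datatypes.S y). simpl. intros; lia.
  - destruct (@fin_bound _ (fun i n => forall x, occurs x (args i) -> x < n)) as [n Hn].
    + intros i m m' Hle Hm x Hx. specialize (Hm x Hx). lia.
    + exact IH.
    + exists n. simpl. intros x [i Hi]. exact (Hn i x Hi).
Qed.

Lemma form_bound (S : signature) (phi : form S) :
  exists n, forall x, free x phi -> x < n.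
Proof.
  induction phi as [t1 t2|r args|p IH|p IH1 q IH2|y p IH].
  - destruct (term_bound _ t1) as [n1 H1]; destruct (term_bound _ t2) as [n2 H2].
    exists (n1 + n2). simpl. intros x [Hx|Hx]; [specialize (H1 x Hx)|specialize (H2 x Hx)]; lia.
  - destruct (@fin_bound _ (fun i n => forall x, occurs x (args i) -> x < n)) as [n Hn].
    + intros i m m' Hle Hm x Hx. specialize (Hm x Hx). lia.
    + intro i. apply term_bound.
    + exists n. simpl. intros x [i Hi]. exact (Hn i x Hi).
  - exact IH.
  - destruct IH1 as [n1 H1]; destruct IH2 as [n2 H2].
    exists (n1 + n2). simpl. intros x [Hx|Hx]; [specialize (H1 x Hx)|specialize (H2 x Hx)]; lia.
  - destruct IH as [n H]. exists n. simpl. intros x [_ Hx]. auto.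
Qed.

Lemma foralls_free (S : signature) n (phi : form S) x :
  free x (foralls n phi) -> free x phi /\ n <= x.
Proof.
  induction n as [|n IH]; simpl; intros H.
  - split; [exact H|lia].
  - destruct H as [Hne H]. destruct (IH H). split; [assumption|lia].
Qed.

Lemma foralls_intro (S : signature) (A : structure S) n (phi : form S) :
  (forall s : assignment A, sat s phi) -> forall s : assignment A, sat s (foralls n phi).
Proof.
  intro H. induction n as [|n IH]; simpl; intros s.
  - apply H.
  - intro a. apply IH.
Qed.

Lemma foralls_elim (S : signature) (A : structure S) n (phi : form S) :
  forall s : assignment A, sat s (foralls n phi) -> sat s phi.
Proof.
  induction n as [|n IH]; simpl; intros s H.
  - exact H.
  - specialize (H (s n)).
    assert (E : update s n (s n) = s).
    { apply functional_extensionality. intro y. unfold update.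
      destruct (Nat.eqb_spec y n); subst; reflexivity. }
    rewrite E in H. apply IH; exact H.
Qed.

Theorem mainTheorem14 (S : signature)
    (HF : countable_type (Fsym S)) (HR : countable_type (Rsym S))
    (Delta : tform S -> Prop) (alpha : form S) :
  subset_tildeFO Delta ->
  entails Delta (tFO alpha) ->
  exists eps : form S,
    sentence eps /\
    entails Delta (tFO eps) /\
    entails (fun g => g = tFO eps) (tFO alpha).
Proof.
  intros Hsub Hent.
  destruct (form_bound _ alpha) as [n Hn].
  exists (foralls n alpha). split; [|split].
  - intros x Hx. destruct (foralls_free _ _ _ _ Hx) as [H1 H2].
    specialize (Hn x H1). lia.
  - intros A T HD. simpl. intros s _.
    apply foralls_intro.
    assert (Hfull := Hent A (fun _ => True)). simpl in Hfull.
    intro s'. apply (Hfull); [|exact I].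
    intros g Hg. destruct (Hsub g Hg) as [b Eb]. subst g.
    specialize (HD _ Hg). simpl in HD |- *.
    intro Hall. apply HD. intros s0 _. apply Hall. exact I.
  - intros A T HD. simpl. intros s Hs.
    specialize (HD _ eq_refl). simpl in HD.
    apply (foralls_elim _ _ n). apply HD; exact Hs.
Qed.
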